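(* Let $f:\{0,1\}^n\to\{0,1\}$, let $\delta>0$, let $a,b$ be non-negative integers, $\alpha_0\in[0,1)$, $\beta_0,\alpha_1,\beta_1\ge0$, and let $\mu$ be a bit-wise product distribution on $\{0,1\}^n$ that is $(\alpha_0,\beta_0,\alpha_1,\beta_1,a,b)$-feasible for $f$. Then there is a deterministic decision tree for $f$ of depth at most $ab$ whose error probability under $\mu$ is at most $$\frac14+\alpha_1+\beta_1+4b(\beta_1+\delta)+\frac{\beta_0}{(1-\alpha_0)\delta}.$$
   Context: $\mu$ is bit-wise product if $\mu(x)=\prod_i p_i(x_i)$ with $p_i(0)+p_i(1)=1$. A subcube with support $s\in\{0,1,\star\}^n$ is $\{x: s_i\ne\star\Rightarrow x_i=s_i\}$; its support size is $|\{i:s_i\in\{0,1\}\}|$. For $A\subseteq\{0,1\}^n$, $\mu_z(A)=\mu(A\cap f^{-1}(z))$, $\mu_z=\mu_z(\{0,1\}^n)$. $\mu$ is $(\alpha_0,\beta_0,\alpha_1,\beta_1,a,b)$-feasible for $f$ if there exist $u_R\ge0$ indexed by subcubes $R$ of support size at most $a$ and $w_R\ge0$ indexed by subcubes $R$ of support size at most $b$ with: $\sum_{R\ni x}u_R\ge1-\alpha_0$ for all $x\in f^{-1}(0)$; $\sum_{R\ni x}u_R\le\beta_0$ for all $x\in f^{-1}(1)$; $\sum_R\mu_1(R)w_R\ge(1-\alpha_1)\mu_1$; $\sum_{R\ni x}w_R\le1$ for all $x$; $\sum_{R\ni x}w_R\le\beta_1$ for all $x\in f^{-1}(0)$. Convention: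 if $p_i(0)\in\{0,1\}$ (bit $i$ fixed under $\mu$), then $i$ is not in the support of any $R$ used in the feasible solution. *)

(* Defs.v *)
From HB Require Import structures.
From mathcomp Require Import all_boot all_order all_algebra.
Set Implicit Arguments. Unset Strict Implicit. Unset Printing Implicit Defensive.
Import Order.TTheory GRing.Theory Num.Theory.
Local Open Scope ring_scope.

(* Points of {0,1}^n : false = 0, true = 1. *)
Definition cube (n : nat) := {ffun 'I_n -> bool}.

(* A subcube support s in {0,1,*}^n : None = star, Some b = fixed to b. *)
Definition support (n : nat) := {ffun 'I_n -> option bool}.

Definition in_subcube (n : nat) (s : support n) (x : cube n) : bool :=
  [forall i, if s i is Some b then x i == b else true].

Definition supp_size (n : nat) (s : support n) : nat :=
  #|[set i | s i != None]|.

Definition is_bitwise_marginals (R : realFieldType) (n : nat) (p : 'I_n -> bool -> R) : Prop :=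
  forall i, 0 <= p i false /\ 0 <= p i true /\ p i false + p i true = 1.

Definition prodmu (R : realFieldType) (n : nat) (p : 'I_n -> bool -> R) (x : cube n) : R :=
  \prod_(i < n) p i (x i).

(* mu_z(A) for A a subcube: mu(A ∩ f^{-1}(z)) *)
Definition mu_z_sub (R : realFieldType) (n : nat) (p : 'I_n -> bool -> R)
  (f : cube n -> bool) (z : bool) (s : support n) : R :=
  \sum_(x : cube n | in_subcube s x && (f x == z)) prodmu p x.

Definition mu_z (R : realFieldType) (n : nat) (p : 'I_n -> bool -> R)
  (f : cube n -> bool) (z : bool) : R :=
  \sum_(x : cube n | f x == z) prodmu p x.

Definition fixed_bit (R : realFieldType) (n : nat) (p : 'I_n -> bool -> R) (i : 'I_n) : bool :=
  (p i false == 0) || (p i false == 1).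

Definition admissible_weights (R : realFieldType) (n : nat) (p : 'I_n -> bool -> R)
  (k : nat) (w : support n -> R) : Prop :=
  forall s, 0 <= w s /\
    ((k < supp_size s)%N \/ (exists i, (s i != None) && fixed_bit p i) -> w s = 0).

Definition cover (R : realFieldType) (n : nat) (w : support n -> R) (x : cube n) : R :=
  \sum_(s : support n | in_subcube s x) w s.

Definition feasible (R : realFieldType) (n : nat) (p : 'I_n -> bool -> R)
  (f : cube n -> bool) (alpha0 beta0 alpha1 beta1 : R) (a b : nat) : Prop :=
  exists (u w : support n -> R),
    admissible_weights p a u /\ admissible_weights p b w /\
    (forall x, f x = false -> 1 - alpha0 <= cover u x) /\
    (forall x, f x = true -> cover u x <= beta0) /\
    (1 - alpha1) * mu_z p f true <= \sum_(s : support n) mu_z_sub p f true s * w s /\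
    (forall x, cover w x <= 1) /\
    (forall x, f x = false -> cover w x <= beta1).

Inductive dtree (n : nat) : Type :=
  | Leaf : bool -> dtree n
  | Query : 'I_n -> dtree n -> dtree n -> dtree n. (* child for 0, child for 1 *)

Fixpoint dt_eval (n : nat) (t : dtree n) (x : cube n) : bool :=
  match t with
  | Leaf v => v
  | Query i t0 t1 => if x i then dt_eval t1 x else dt_eval t0 x
  end.

Fixpoint dt_depth (n : nat) (t : dtree n) : nat :=
  match t with
  | Leaf _ => 0
  | Query _ t0 t1 => (maxn (dt_depth t0) (dt_depth t1)).+1
  end.

Definition dt_error (R : realFieldType) (n : nat) (p : 'I_n -> bool -> R)
  (f : cube n -> bool) (t : dtree n) : R :=
  \sum_(x : cube n | dt_eval t x != f x) prodmu p x.

(* Main.v *)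
Require Import Defs.
From HB Require Import structures.
From mathcomp Require Import all_boot all_order all_algebra.
From mathcomp Require Import ring lra zify.
Import Order.TTheory GRing.Theory Num.Theory.
Set Implicit Arguments. Unset Strict Implicit. Unset Printing Implicit Defensive.
Local Open Scope ring_scope.



Definition agree n (D : {set 'I_n}) (c x : cube n) : bool := [forall i in D, x i == c i].
Definition suppS n (s : Defs.support n) : {set 'I_n} := [set i | s i != None].
Definition mix n (S : {set 'I_n}) (y z : cube n) : cube n :=
  [ffun i => if i \in S then z i else y i].
Definition setQ n (Q : Defs.support n) (y : cube n) : cube n :=
  [ffun i => if Q i is Some b then b else y i].
Definition errP (R : realFieldType) n (p : 'I_n -> bool -> R) (f : cube n -> bool)
  (P : pred (cube n)) (T : dtree n) : R :=
  \sum_(x | P x && (dt_eval T x != f x)) prodmu p x.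
Definition Phi (R : realFieldType) n (w : Defs.support n -> R) (k : nat) (D : {set 'I_n}) (x : cube n) : R :=
  \sum_(s | in_subcube s x && (k < #|suppS s :\: D|)%N) w s.

Lemma sum_sub_le (R : realFieldType) (T : finType) (A B : pred T) (F : T -> R) :
  (forall i, A i -> B i) -> (forall i, B i -> 0 <= F i) ->
  \sum_(i | A i) F i <= \sum_(i | B i) F i.
Proof.
move=> AB F0; rewrite [X in _ <= X](bigID A) /=.
have -> : \sum_(i | A i) F i = \sum_(i | B i && A i) F i.
  by apply: eq_bigl => i; case Ai: (A i); rewrite ?andbT ?andbF //= AB.
by rewrite lerDl sumr_ge0 // => i /andP [] /F0.
Qed.

Lemma mu_ge0 (R : realFieldType) n (p : 'I_n -> bool -> R) x :
  is_bitwise_marginals p -> 0 <= prodmu p x.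
Proof.
move=> hp; rewrite /prodmu; apply: prodr_ge0 => i _.
by case: (hp i) => [h0 [h1 _]]; case: (x i).
Qed.

Lemma mu_total (R : realFieldType) n (p : 'I_n -> bool -> R) :
  is_bitwise_marginals p -> \sum_x prodmu p x = 1.
Proof.
move=> hp; rewrite /prodmu.
rewrite -(bigA_distr_bigA (fun i (b : bool) => p i b)) /=.
rewrite big1 // => i _; rewrite big_bool /=.
by case: (hp i) => [_ [_ h]]; rewrite addrC.
Qed.

Lemma mix_inv n (S : {set 'I_n}) y z :
  mix S (mix S y z) (mix S z y) = y.
Proof. by apply/ffunP => i; rewrite !ffunE; case: (i \in S). Qed.

Lemma mu_mix (R : realFieldType) n (p : 'I_n -> bool -> R) S y z :
  prodmu p (mix S y z) * prodmu p (mix S z y) = prodmu p y * prodmu p z.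
Proof.
rewrite /prodmu -!big_split /=; apply: eq_bigr => i _.
by rewrite !ffunE; case: (i \in S) => //; rewrite mulrC.
Qed.

Lemma swap_sum (R : realFieldType) n (p : 'I_n -> bool -> R) S (F : cube n -> cube n -> R) :
  \sum_y \sum_z prodmu p y * prodmu p z * F y z =
  \sum_y \sum_z prodmu p y * prodmu p z * F (mix S y z) (mix S z y).
Proof.
rewrite !pair_big /=.
rewrite (reindex_inj (h := fun q : cube n * cube n => (mix S q.1 q.2, mix S q.2 q.1))) /=.
  by apply: eq_bigr => q _; rewrite mu_mix.
move=> [y z] [y' z'] /= [e1 e2].
have -> : y = y' by rewrite -(mix_inv S y z) e1 e2 mix_inv.
by have -> : z = z' by rewrite -(mix_inv S z y) e1 e2 mix_inv.
Qed.



Lemma agree_mix n D (c : cube n) S y z :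
  agree D c (mix S y z) && agree D c (mix S z y) = agree D c y && agree D c z.
Proof.
apply/andP/andP => [[/forall_inP h1 /forall_inP h2]|[/forall_inP h1 /forall_inP h2]];
  split; apply/forall_inP => i iD; move: (h1 i iD) (h2 i iD); rewrite !ffunE;
  by case: (i \in S).
Qed.

Lemma inQ_mix n (Q : Defs.support n) y z :
  in_subcube Q (mix (suppS Q) z y) = in_subcube Q y.
Proof.
rewrite /in_subcube; apply: eq_forallb => i; rewrite ffunE /suppS inE.
by case: (Q i).
Qed.

Lemma setQ_mix n (Q : Defs.support n) y z :
  in_subcube Q y -> setQ Q (mix (suppS Q) y z) = y.
Proof.
move=> /forallP h; apply/ffunP => i; rewrite !ffunE /suppS inE.
by move: (h i); case: (Q i) => // b /eqP ->.
Qed.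

Lemma prod_sums (R : realFieldType) (T : finType) (A B : pred T) (G H : T -> R) :
  (\sum_(y | A y) G y) * (\sum_(z | B z) H z) =
  \sum_y \sum_z (if A y then G y else 0) * (if B z then H z else 0).
Proof.
rewrite !big_mkcond big_distrl /=; apply: eq_bigr => y _.
rewrite big_distrr /= [LHS]big_mkcond /=; apply: eq_bigr => z _.
by case: (B z); rewrite ?mulr0.
Qed.

Lemma swapQ (R : realFieldType) n (p : 'I_n -> bool -> R) D c (Q : Defs.support n)
  (g : cube n -> R) :
  (\sum_(x | agree D c x && in_subcube Q x) prodmu p x) *
  (\sum_(y | agree D c y) prodmu p y * g (setQ Q y)) =
  (\sum_(y | agree D c y) prodmu p y) *
  (\sum_(x | agree D c x && in_subcube Q x) prodmu p x * g x).
Proof.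
rewrite mulrC [RHS]mulrC !prod_sums.
pose F := fun y z : cube n =>
  ((agree D c y && agree D c z && in_subcube Q z)%:R : R) * g (setQ Q y).
transitivity (\sum_y \sum_z prodmu p y * prodmu p z * F y z).
  apply: eq_bigr => y _; apply: eq_bigr => z _; rewrite /F.
  case: (agree D c y); case: (agree D c z); case: (in_subcube Q z);
    rewrite /= ?mul0r ?mulr0 ?mul1r ?mulr1 //.
  by rewrite mulrAC.
rewrite (swap_sum p (suppS Q)).
apply: eq_bigr => y _; apply: eq_bigr => z _; rewrite /F.
rewrite -andbA andbA agree_mix inQ_mix.
case Ay: (agree D c y); case Az: (agree D c z); case Qy: (in_subcube Q y);
  rewrite /= ?mul0r ?mulr0 ?mul1r ?mulr1 //.
by rewrite setQ_mix // mulrAC.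
Qed.



Lemma sum_exch (R : realFieldType) n (A : pred (cube n)) (G : cube n -> R)
  (v : Defs.support n -> R) :
  \sum_Q v Q * \sum_(x | A x && in_subcube Q x) G x = \sum_(x | A x) G x * Defs.cover v x.
Proof.
under eq_bigr => Q _ do rewrite big_distrr /=.
rewrite (exchange_big_dep A) /=; last by move=> Q x _ /andP [].
apply: eq_bigr => x Ax; rewrite /Defs.cover big_distrr /=.
by apply: eq_big => [Q|Q _]; rewrite ?Ax // mulrC.
Qed.

Definition agreeon n (vs : seq 'I_n) (c x : cube n) : bool := all (fun j => x j == c j) vs.

Lemma errP_ext (R : realFieldType) n (p : 'I_n -> bool -> R) f (P P' : pred (cube n)) T :
  P =1 P' -> errP p f P T = errP p f P' T.
Proof. by move=> e; apply: eq_bigl => x; rewrite e. Qed.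

Lemma query_seq (R : realFieldType) n (p : 'I_n -> bool -> R) f (vs : seq 'I_n) :
  uniq vs -> forall (P : pred (cube n)) (d : nat) (g : cube n -> R),
  (forall c', exists T', (dt_depth T' <= d)%N /\
     errP p f (fun x => P x && agreeon vs c' x) T' <=
     \sum_(x | P x && agreeon vs c' x) prodmu p x * g x) ->
  exists T, (dt_depth T <= d + size vs)%N /\
     errP p f P T <= \sum_(x | P x) prodmu p x * g x.
Proof.
elim: vs => [|i vs IH] /=.
  move=> _ P d g h; have [T' [hd he]] := h [ffun _ => false].
  exists T'; split; first by rewrite addn0.
  rewrite (errP_ext _ _ _ (P' := fun x => P x && agreeon [::] [ffun _ => false] x)); last first.
    by move=> x; rewrite /agreeon /= andbT.
  by apply: (le_trans he); rewrite le_eqVlt; apply/orP; left; apply/eqP;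
    apply: eq_bigl => x; rewrite /agreeon /= andbT.
move=> /andP [iv uv] P d g h.
have hb : forall bb : bool, exists T, (dt_depth T <= d + size vs)%N /\
   errP p f (fun x => P x && (x i == bb)) T <= \sum_(x | P x && (x i == bb)) prodmu p x * g x.
  move=> bb; apply: (IH uv) => c'.
  pose c'' : cube n := [ffun j => if j == i then bb else c' j].
  have [T' [hd he]] := h c''.
  have ep : forall x, P x && agreeon (i :: vs) c'' x = P x && (x i == bb) && agreeon vs c' x.
    move=> x; rewrite /agreeon /= ffunE eqxx -andbA; congr (_ && (_ && _)).
    apply: eq_in_all => j jv /=; rewrite ffunE; case: (j =P i) => // ji.
    by move: jv; rewrite ji (negbTE iv).
  exists T'; split => //.
  rewrite (errP_ext _ _ _ (P' := fun x => P x && agreeon (i :: vs) c'' x)); last by move=> x; rewrite ep.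
  apply: (le_trans he); rewrite le_eqVlt; apply/orP; left; apply/eqP.
  by apply: eq_bigl => x; rewrite ep.
have [T0 [hd0 he0]] := hb false.
have [T1 [hd1 he1]] := hb true.
exists (Query i T0 T1); split.
  by rewrite /= addnS ltnS geq_max hd0 hd1.
rewrite /errP (bigID (fun x : cube n => x i)) /= [X in _ <= X](bigID (fun x : cube n => x i)) /=.
have -> : \sum_(x | P x && (dt_eval (Query i T0 T1) x != f x) && x i) prodmu p x
   = errP p f (fun x => P x && (x i == true)) T1.
  by apply: eq_bigl => x /=; case: (x i); rewrite /= ?andbF ?andbT // andbC.
have -> : \sum_(x | P x && (dt_eval (Query i T0 T1) x != f x) && ~~ x i) prodmu p x
   = errP p f (fun x => P x && (x i == false)) T0.
  by apply: eq_bigl => x /=; case: (x i); rewrite /= ?andbF ?andbT // andbC.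
have -> : \sum_(x | P x && x i) prodmu p x * g x = \sum_(x | P x && (x i == true)) prodmu p x * g x.
  by apply: eq_bigl => x /=; case: (x i).
have -> : \sum_(x | P x && ~~ x i) prodmu p x * g x = \sum_(x | P x && (x i == false)) prodmu p x * g x.
  by apply: eq_bigl => x /=; case: (x i).
by apply: lerD.
Qed.



Lemma Phi_ge0 (R : realFieldType) n (w : Defs.support n -> R) k D x :
  (forall s, 0 <= w s) -> 0 <= Phi w k D x.
Proof. by move=> w0; apply: sumr_ge0 => s _. Qed.

Lemma base_bound (R : realFieldType) n (p : 'I_n -> bool -> R) f (w : Defs.support n -> R) beta1 D c :
  is_bitwise_marginals p -> (forall s, 0 <= w s) -> (forall x, Defs.cover w x <= 1) ->
  (forall x, f x = false -> Defs.cover w x <= beta1) -> 0 <= beta1 ->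
  exists T, dt_depth T = 0%N /\ errP p f (agree D c) T <=
    \sum_(x | agree D c x) prodmu p x * ((f x)%:R * (1 - Defs.cover w x + beta1 + Phi w 0 D x)).
Proof.
move=> hp w0 cw1 cwb b0.
have rhs0 : forall x, 0 <= prodmu p x * ((f x)%:R * (1 - Defs.cover w x + beta1 + Phi w 0 D x)).
  move=> x; apply: mulr_ge0; first exact: mu_ge0.
  apply: mulr_ge0 => //; rewrite addr_ge0 ?Phi_ge0 // addr_ge0 //.
  by rewrite subr_ge0.
case: (boolP [exists x, agree D c x && ~~ f x]) => [/existsP [x0 /andP [a0 f0]] | /existsPn none].
  exists (Leaf n false); split => //.
  rewrite /errP [X in X <= _]big_mkcond [X in _ <= X]big_mkcond; apply: ler_sum => x _ /=.
  case Ax: (agree D c x) => //=.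
  case fx: (f x) => /=; last by rewrite mul0r mulr0.
  rewrite mul1r; apply: ler_peMr; first exact: mu_ge0.
  suff : Defs.cover w x <= Phi w 0 D x + beta1 by move=> h; lra.
  rewrite /Defs.cover (bigID (fun s => 0 < #|suppS s :\: D|)%N) /= lerD //.
  apply: le_trans (cwb x0 (negbTE f0)); apply: sum_sub_le => // s /andP [sx].
  rewrite lt0n negbK cards_eq0 setD_eq0 => /subsetP sub.
  apply/forallP => i; case si: (s i) => [bi|] //.
  have iD : i \in D by apply: sub; rewrite inE si.
  move/forallP: sx => /(_ i); rewrite si => /eqP <-.
  by move/forall_inP: a0 => /(_ i iD) /eqP ->; move/forall_inP: Ax => /(_ i iD) /eqP ->.
exists (Leaf n true); split => //.
rewrite /errP [X in X <= _]big_mkcond [X in _ <= X]big_mkcond; apply: ler_sum => x _ /=.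
case Ax: (agree D c x) => //=.
case fx: (f x) => /=; first by move: (rhs0 x); rewrite fx.
by move: (none x); rewrite Ax fx.
Qed.



Lemma Phi_step (R : realFieldType) n (w : Defs.support n -> R) k D (c : cube n)
  (Q : Defs.support n) z0 x :
  (forall s, 0 <= w s) -> agree D c z0 -> in_subcube Q z0 -> agree D c x ->
  Phi w k (D :|: suppS Q) x <= Phi w k.+1 D x + Defs.cover w (setQ Q x).
Proof.
move=> w0 az0 qz0 ax.
rewrite /Phi (bigID (fun s => k.+1 < #|suppS s :\: D|)%N) /=; apply: lerD.
  by apply: sum_sub_le => // s /andP [/andP [-> _] ->].
apply: sum_sub_le => // s /andP [/andP [sx hk] hk'].
apply/forallP => i; case si: (s i) => [bi|] //.
have xi : x i = bi by move/forallP: sx => /(_ i); rewrite si => /eqP.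
rewrite ffunE; case qi: (Q i) => [qb|]; last by rewrite xi.
have iD : i \in D.
  apply/negPn/negP => iD.
  have pr : (suppS s :\: (D :|: suppS Q)) \proper (suppS s :\: D).
    apply/properP; split.
      by apply/subsetP => j; rewrite !inE negb_or -andbA => /and3P [-> _ ->].
    by exists i; rewrite /suppS !inE ?si ?qi ?(negbTE iD).
  move: (proper_card pr) hk hk' => h1 h2; rewrite -leqNgt => h3.
have := leq_ltn_trans h2 h1; by rewrite ltnNge h3.
have z0i : z0 i = qb by move/forallP: qz0 => /(_ i); rewrite qi => /eqP.
move/forall_inP: az0 => /(_ i iD) /eqP; move/forall_inP: ax => /(_ i iD) /eqP.
by rewrite z0i xi => -> ->.
Qed.



Lemma average (R : realFieldType) (T : finType) (wt F : T -> R) K L :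
  (forall t, 0 <= wt t) -> 0 < K -> K <= \sum_t wt t -> \sum_t wt t * F t <= L -> 0 <= L ->
  exists t, 0 < wt t /\ F t * K <= L.
Proof.
move=> wt0 K0 hK hL L0.
case: (boolP [exists t, 0 < wt t]) => [/existsP [t0 wt0p]|/existsPn none]; last first.
  have : \sum_t wt t = 0.
    by apply: big1 => t _; apply/eqP; rewrite eq_le wt0 andbT leNgt none.
  move=> e; rewrite e in hK; lra.
case: (boolP [exists t, (0 < wt t) && (F t * K <= L)]) => [/existsP [t /andP [h1 h2]]|/existsPn bad].
  by exists t.
have ht : forall t, wt t * L <= wt t * (F t * K).
  move=> t; move: (bad t); case: (ltrP 0 (wt t)) => h /=.
    by rewrite -ltNge => h'; apply: ler_wpM2l; [exact: ltW | exact: ltW].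
  have -> : wt t = 0 by apply/eqP; rewrite eq_le h wt0.
  by rewrite !mul0r.
have lt0 : wt t0 * L < wt t0 * (F t0 * K).
  by move: (bad t0); rewrite wt0p /= -ltNge => h; rewrite ltr_pM2l.
have : \sum_t wt t * L < \sum_t wt t * (F t * K).
  rewrite (bigD1 t0) // [X in _ < X](bigD1 t0) //=; apply: ltr_leD => //.
  by apply: ler_sum.
rewrite -mulr_suml.
have -> : \sum_t wt t * (F t * K) = (\sum_t wt t * F t) * K.
  by rewrite mulr_suml; apply: eq_bigr => t _; rewrite mulrA.
move=> h.
have h1 : (\sum_t wt t * F t) * K <= L * K by rewrite ler_pM2r.
have h2 : K * L <= (\sum_t wt t) * L by rewrite ler_wpM2r.
lra.
Qed.



Lemma agree_ext n (D S : {set 'I_n}) (c c' x : cube n) :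
  agree D c x && agreeon (enum (S :\: D)) c' x =
  agree (D :|: S) [ffun j => if j \in D then c j else c' j] x.
Proof.
apply/andP/forall_inP => [[/forall_inP h1 /allP h2] j|h].
  rewrite inE ffunE; case jD: (j \in D) => /= jS; first exact: h1.
  by apply: h2; rewrite mem_enum inE jD.
split.
  by apply/forall_inP => j jD; have := h j; rewrite !inE ffunE jD /=; apply.
apply/allP => j; rewrite mem_enum inE => /andP [jD jS].
by have := h j; rewrite !inE ffunE jS orbT (negbTE jD); apply.
Qed.

Lemma claim (R : realFieldType) n (p : 'I_n -> bool -> R) (f : cube n -> bool)
  (u w : Defs.support n -> R) (a : nat) (alpha0 beta0 beta1 theta : R) :
  is_bitwise_marginals p ->
  (forall s, 0 <= u s) -> (forall s, 0 <= w s) ->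
  (forall s, (a < supp_size s)%N -> u s = 0) ->
  (forall x, f x = false -> 1 - alpha0 <= Defs.cover u x) ->
  (forall x, f x = true -> Defs.cover u x <= beta0) ->
  (forall x, Defs.cover w x <= 1) ->
  (forall x, f x = false -> Defs.cover w x <= beta1) ->
  alpha0 < 1 -> 0 <= beta0 -> 0 <= beta1 -> 0 < theta ->
  forall k D c, exists T, (dt_depth T <= k * a)%N /\
    errP p f (agree D c) T <= \sum_(x | agree D c x) prodmu p x *
      ((f x)%:R * (1 - Defs.cover w x + beta1 + Phi w k D x) +
       (k%:R * (beta1 + beta0 / ((1 - alpha0) * theta)) + theta)).
Proof.
move=> hp u0 w0 ua hu0 hu1 cw1 cwb a1 b0 b1 th.
set cc := beta1 + beta0 / ((1 - alpha0) * theta).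
have K0 : 0 < (1 - alpha0) * theta by rewrite mulr_gt0 // subr_gt0.
have cc0 : 0 <= cc by rewrite addr_ge0 // divr_ge0 // ltW.
have mu0 : forall x, 0 <= prodmu p x by move=> x; exact: mu_ge0.
have cov0 : forall (v : Defs.support n -> R) x, (forall s, 0 <= v s) -> 0 <= Defs.cover v x.
  by move=> v x v0; apply: sumr_ge0.
have brk0 : forall k D x, 0 <= (f x)%:R * (1 - Defs.cover w x + beta1 + Phi w k D x).
  move=> k D x; apply: mulr_ge0 => //; rewrite addr_ge0 ?Phi_ge0 // addr_ge0 //.
  by rewrite subr_ge0.
elim=> [|k IH] D c.
  have [T [hd he]] := base_bound D c hp w0 cw1 cwb b1.
  exists T; split; first by rewrite hd.
  apply: (le_trans he); apply: ler_sum => x _; apply: ler_wpM2l => //.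
  by rewrite mul0r add0r lerDl ltW.
set mm := \sum_(x | agree D c x) prodmu p x.
set m0 := \sum_(x | agree D c x && ~~ f x) prodmu p x.
have mm0 : 0 <= mm by apply: sumr_ge0.
have m0mm : m0 <= mm by apply: sum_sub_le => // x /andP [].
have [hle|hlt] := leP m0 (theta * mm).
  exists (Leaf n true); split => //.
  have -> : errP p f (agree D c) (Leaf n true) = m0.
    by apply: eq_bigl => x /=; case: (f x); rewrite ?andbT ?andbF.
  apply: (le_trans hle); rewrite /mm mulr_sumr; apply: ler_sum => x _.
  rewrite mulrC; apply: ler_wpM2l => //.
  have := brk0 k.+1 D x; have : 0 <= k.+1%:R * cc by rewrite mulr_ge0.
  move=> h1 h2; lra.
pose wt := fun Q : Defs.support n => u Q * \sum_(x | agree D c x && in_subcube Q x) prodmu p x.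
pose FQ := fun Q : Defs.support n => \sum_(y | agree D c y) prodmu p y * (f (setQ Q y))%:R.
set m1 := \sum_(x | agree D c x) prodmu p x * (f x)%:R.
have wt0 : forall Q, 0 <= wt Q by move=> Q; rewrite mulr_ge0 // sumr_ge0.
have hA : (1 - alpha0) * m0 <= \sum_Q wt Q.
  rewrite /wt (sum_exch (agree D c) (prodmu p) u).
  rewrite [X in _ <= X](bigID (fun x => ~~ f x)) /=.
  have hB0 : 0 <= \sum_(i | agree D c i && ~~ ~~ f i) prodmu p i * Defs.cover u i.
    by apply: sumr_ge0 => x _; apply: mulr_ge0; [exact: mu0 | exact: cov0].
  suff : (1 - alpha0) * m0 <= \sum_(i | agree D c i && ~~ f i) prodmu p i * Defs.cover u i.
    by move=> h; lra.
  rewrite /m0 mulr_sumr; apply: ler_sum => x /andP [_ fx].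
  by rewrite mulrC ler_wpM2l // hu0 //; apply: negbTE.
have hB : \sum_Q wt Q * FQ Q <= mm * beta0 * m1.
  have -> : \sum_Q wt Q * FQ Q =
      \sum_Q u Q * (mm * \sum_(x | agree D c x && in_subcube Q x) prodmu p x * (f x)%:R).
    apply: eq_bigr => Q _; rewrite /wt /FQ -mulrA.
    by rewrite (swapQ p D c Q (fun z => (f z)%:R)).
  under eq_bigr => Q _ do rewrite mulrCA.
  rewrite -mulr_sumr (sum_exch (agree D c) (fun x => prodmu p x * (f x)%:R) u) -mulrA.
  apply: ler_wpM2l => //; rewrite /m1 mulr_sumr; apply: ler_sum => x _.
  rewrite mulrC; case fx: (f x) => /=; last by rewrite !mulr0 ?mul0r.
  by apply: ler_wpM2r; [rewrite mulr_ge0 | exact: hu1].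
have m0p : 0 < m0 by apply: le_lt_trans hlt; rewrite mulr_ge0 // ltW.
have mmp : 0 < mm by apply: lt_le_trans m0mm.
have KK : 0 < (1 - alpha0) * m0 by rewrite mulr_gt0 // subr_gt0.
have m1mm : m1 <= mm.
  by apply: ler_sum => x _; case: (f x); rewrite ?mulr1 ?mulr0.
have m10 : 0 <= m1 by apply: sumr_ge0 => x _; rewrite mulr_ge0.
have [Q [wtQ hFQ]] := average wt0 KK hA hB (mulr_ge0 (mulr_ge0 mm0 b0) m10).
have uQ : u Q != 0 by apply/eqP => e; move: wtQ; rewrite /wt e mul0r ltxx.
have szQ : (supp_size Q <= a)%N.
  by rewrite leqNgt; apply: contra uQ => /ua ->.
have [z0 /andP [az0 qz0]] : exists z0, agree D c z0 && in_subcube Q z0.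
  apply/existsP; apply: contraTT wtQ => /existsPn none.
  by rewrite /wt big_pred0 ?mulr0 ?ltxx // => x; apply/negbTE/none.
have FQ0 : 0 <= FQ Q by apply: sumr_ge0 => x _; rewrite mulr_ge0.
have FQb : FQ Q <= beta0 / ((1 - alpha0) * theta) * mm.
  rewrite mulrAC ler_pdivlMr //.
  have h1 : FQ Q * ((1 - alpha0) * theta) * mm <= FQ Q * ((1 - alpha0) * m0).
    rewrite -mulrA; apply: ler_wpM2l => //; rewrite -mulrA; apply: ler_wpM2l.
      by rewrite subr_ge0 ltW.
    exact: ltW.
  have h2 : mm * beta0 * m1 <= mm * beta0 * mm by rewrite ler_wpM2l // mulr_ge0.
  have : FQ Q * ((1 - alpha0) * theta) * mm <= beta0 * mm * mm.
    apply: (le_trans h1); apply: (le_trans hFQ); apply: (le_trans h2).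
    by rewrite (mulrC mm beta0).
  by rewrite ler_pM2r.
set S := suppS Q.
have [T [hd he]] : exists T, (dt_depth T <= k * a + size (enum (S :\: D)))%N /\
    errP p f (agree D c) T <= \sum_(x | agree D c x) prodmu p x *
      ((f x)%:R * (1 - Defs.cover w x + beta1 + Phi w k (D :|: S) x) + (k%:R * cc + theta)).
  apply: (@query_seq R n p f _ (enum_uniq (S :\: D)) (agree D c) (k * a)%N
    (fun x => (f x)%:R * (1 - Defs.cover w x + beta1 + Phi w k (D :|: S) x) +
       (k%:R * cc + theta))) => c'.
  have [T' [hd' he']] := IH (D :|: S) [ffun j => if j \in D then c j else c' j].
  exists T'; split => //.
  rewrite (errP_ext _ _ _ (P' := agree (D :|: S) [ffun j => if j \in D then c j else c' j])); last first.
    by move=> x; rewrite agree_ext.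
  apply: (le_trans he'); rewrite le_eqVlt; apply/orP; left; apply/eqP.
  by apply: eq_bigl => x; rewrite agree_ext.
exists T; split.
  apply: (leq_trans hd); rewrite mulSn addnC leq_add2r -cardE.
  apply: leq_trans szQ; exact: subset_leq_card (subsetDl _ _).
apply: (le_trans he).
have step : forall x, agree D c x ->
   prodmu p x * ((f x)%:R * (1 - Defs.cover w x + beta1 + Phi w k (D :|: S) x) + (k%:R * cc + theta))
   <= prodmu p x * ((f x)%:R * (1 - Defs.cover w x + beta1 + Phi w k.+1 D x) +
        (k.+1%:R * cc + theta)) +
      (prodmu p x * ((f x)%:R * Defs.cover w (setQ Q x)) - prodmu p x * cc).
  move=> x ax; have hP := Phi_step k w0 az0 qz0 ax.
  rewrite addrA -mulrBr -!mulrDr; apply: ler_wpM2l => //.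
  rewrite -natr1.
  case: (f x) => /=; rewrite ?mul1r ?mul0r; lra.
apply: le_trans (ler_sum _ step) _.
rewrite big_split /= -[X in _ <= X]addr0 lerD2l sumrB subr_le0 -mulr_suml.
have : \sum_(x | agree D c x) prodmu p x * ((f x)%:R * Defs.cover w (setQ Q x))
    <= \sum_(x | agree D c x) (prodmu p x * beta1 + prodmu p x * (f (setQ Q x))%:R).
  apply: ler_sum => x _; rewrite -mulrDr; apply: ler_wpM2l => //.
  have hc := cov0 w (setQ Q x) w0.
  have : (f x)%:R * Defs.cover w (setQ Q x) <= Defs.cover w (setQ Q x).
    by case: (f x); rewrite ?mul1r ?mul0r.
  case fz: (f (setQ Q x)) => /=.
    by have := cw1 (setQ Q x); move=> h1 h2; lra.
  by have := cwb _ fz; move=> h1 h2; lra.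
rewrite big_split /= -mulr_suml -/mm -/(FQ Q) => h.
rewrite mulrC /cc mulrDl; lra.
Qed.



Lemma final_sum (R : realFieldType) n (p : 'I_n -> bool -> R) (f : cube n -> bool)
  (w : Defs.support n -> R) alpha1 beta1 :
  is_bitwise_marginals p ->
  (1 - alpha1) * mu_z p f true <= \sum_s mu_z_sub p f true s * w s ->
  0 <= alpha1 -> 0 <= beta1 ->
  \sum_x prodmu p x * ((f x)%:R * (1 - Defs.cover w x + beta1)) <= alpha1 + beta1.
Proof.
move=> hp h2 a1 b1.
have mu0 : forall x, 0 <= prodmu p x by move=> x; exact: mu_ge0.
have e1 : \sum_x prodmu p x * (f x)%:R * Defs.cover w x = \sum_s mu_z_sub p f true s * w s.
  have := sum_exch (fun x => f x == true) (prodmu p) w; rewrite /= => e.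
  transitivity (\sum_(x | f x == true) prodmu p x * Defs.cover w x).
    rewrite [RHS]big_mkcond; apply: eq_bigr => x _; case: (f x) => /=.
      by rewrite mulr1.
    by rewrite mulr0 mul0r.
  rewrite -e; apply: eq_bigr => s _; rewrite mulrC /mu_z_sub; congr (_ * _).
  by apply: eq_bigl => x; rewrite andbC.
have e2 : mu_z p f true = \sum_x prodmu p x * (f x)%:R.
  rewrite /mu_z big_mkcond; apply: eq_bigr => x _; case: (f x) => /=.
    by rewrite mulr1.
  by rewrite mulr0.
have M1 : mu_z p f true <= 1.
  rewrite -(mu_total hp) /mu_z; apply: sum_sub_le => //.
have M0 : 0 <= mu_z p f true by apply: sumr_ge0.
have -> : \sum_x prodmu p x * ((f x)%:R * (1 - Defs.cover w x + beta1)) =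
   (1 + beta1) * (\sum_x prodmu p x * (f x)%:R) - \sum_x prodmu p x * (f x)%:R * Defs.cover w x.
  rewrite mulr_sumr -sumrB; apply: eq_bigr => x _; ring.
rewrite e1 -e2.
have hM : 0 <= 1 - mu_z p f true by rewrite subr_ge0.
have := mulr_ge0 (addr_ge0 a1 b1) hM.
nra.
Qed.

Theorem mainTheorem11 (R : realFieldType) (n : nat) (f : cube n -> bool)
  (delta : R) (a b : nat) (alpha0 beta0 alpha1 beta1 : R)
  (p : 'I_n -> bool -> R) :
  0 < delta ->
  0 <= alpha0 -> alpha0 < 1 ->
  0 <= beta0 -> 0 <= alpha1 -> 0 <= beta1 ->
  is_bitwise_marginals p ->
  feasible p f alpha0 beta0 alpha1 beta1 a b ->
  exists t : dtree n,
    (dt_depth t <= a * b)%N /\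
    dt_error p f t <= 1/4 + alpha1 + beta1 + 4 * b%:R * (beta1 + delta)
                      + beta0 / ((1 - alpha0) * delta).
Proof.
move=> dpos a0 a1lt b0 a1 b1 hp [u [w [hu [hw [h0 [h1 [h2 [h3 h4]]]]]]]].
have u0 : forall s, 0 <= u s by move=> s; case: (hu s).
have ua : forall s, (a < supp_size s)%N -> u s = 0.
  by move=> s hs; case: (hu s) => _; apply; left.
have w0 : forall s, 0 <= w s by move=> s; case: (hw s).
have wb : forall s, (b < supp_size s)%N -> w s = 0.
  by move=> s hs; case: (hw s) => _; apply; left.
have mu0 : forall x, 0 <= prodmu p x by move=> x; exact: mu_ge0.
pose c0 : cube n := [ffun _ => false].
have agT : forall x, agree set0 c0 x by move=> x; apply/forall_inP => i; rewrite in_set0.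
have errE : forall T, errP p f (agree set0 c0) T = dt_error p f T.
  by move=> T; apply: eq_bigl => x; rewrite agT.
have PhiZ : forall k x, (b <= k)%N -> Phi w k set0 x = 0.
  move=> k x hbk; apply: big1 => s /andP [_ hk]; apply: wb.
  by move: hk; rewrite setD0 => hk; exact: (leq_ltn_trans hbk hk).
have fs := final_sum hp h2 a1 b1.
have tot := mu_total hp.
have RHS0 : 0 <= beta0 / ((1 - alpha0) * delta).
  by rewrite divr_ge0 // mulr_ge0 // ?subr_ge0 ?ltW.
case: (posnP b) => [bz|bpos].
  have [T [hd he]] := base_bound set0 c0 hp w0 h3 h4 b1.
  exists T; split; first by rewrite hd.
  rewrite -errE; apply: (le_trans he).
  have -> : \sum_(x | agree set0 c0 x) prodmu p x *
      ((f x)%:R * (1 - Defs.cover w x + beta1 + Phi w 0 set0 x)) =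
      \sum_x prodmu p x * ((f x)%:R * (1 - Defs.cover w x + beta1)).
    by apply: eq_big => [x|x _]; rewrite ?agT // PhiZ ?bz // addr0.
  apply: (le_trans fs); rewrite bz mulr0 mul0r addr0.
  lra.
pose theta := b%:R * delta.
have bR : 0 < (b%:R : R) by rewrite ltr0n.
have th : 0 < theta by rewrite mulr_gt0.
have [T [hd he]] := claim hp u0 w0 ua h0 h1 h3 h4 a1lt b0 b1 th b set0 c0.
exists T; split; first by rewrite mulnC.
rewrite -errE; apply: (le_trans he).
set cc := beta1 + beta0 / ((1 - alpha0) * theta).
have -> : \sum_(x | agree set0 c0 x) prodmu p x *
    ((f x)%:R * (1 - Defs.cover w x + beta1 + Phi w b set0 x) + (b%:R * cc + theta)) =
    \sum_x prodmu p x * ((f x)%:R * (1 - Defs.cover w x + beta1)) + (b%:R * cc + theta).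
  rewrite -[X in _ = _ + X]mul1r -tot mulr_suml -big_split /=.
  by apply: eq_big => [x|x _]; rewrite ?agT // PhiZ // addr0 mulrDr.
have ek : b%:R * (beta0 / ((1 - alpha0) * theta)) = beta0 / ((1 - alpha0) * delta).
  rewrite /theta; field.
  by rewrite (gt_eqF dpos) (gt_eqF bR) andbT /= subr_eq0 eq_sym (lt_eqF a1lt).
have : b%:R * cc = b%:R * beta1 + beta0 / ((1 - alpha0) * delta) by rewrite /cc mulrDr ek.
move=> ecc.
have : 0 <= b%:R * beta1 by rewrite mulr_ge0 // ltW.
have : 0 <= theta by exact: ltW.
rewrite /theta in ecc * => t1 t2.
have e4 : 4 * b%:R * (beta1 + delta) = 4 * (b%:R * beta1) + 4 * (b%:R * delta) by ring.
rewrite e4; lra.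
Qed.
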